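(* Let $G=(V,E)$ be a connected simple graph on $n$ vertices and let $c:E\to\mathbb{R}_{\ge 0}$ be any conductance function such that the edges of positive conductance form a connected spanning subgraph of $G$. Then the cyclic cover time of the associated random walk satisfies $CYC[G,c]\ge \frac{1}{2}n^2$.
   Context: For a vertex $v$, $N(v)$ is its set of neighbors. The random walk associated with $(G,c)$ is the Markov chain on $V$ which from the current vertex $v$ moves to $u\in N(v)$ with probability $\frac{c(v,u)}{\sum_{w\in N(v)}c(v,w)}$. The hitting time $H[u,v]$ is the expected number of steps for the walk started at $u$ to reach $v$. The cyclic cover time is $CYC[G,c]=\min_{\sigma}\left(\sum_{i=1}^{n-1}H[v_{\sigma(i)},v_{\sigma(i+1)}]+H[v_{\sigma(n)},v_{\sigma(1)}]\right)$, minimum over all orderings $\sigma$ of the vertices $v_1,\dots,v_n$. *)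

(* Defs.v *)
From Stdlib Require Import Reals Arith List Permutation.
Open Scope R_scope.

(* Vertices are 0, ..., n-1.  The graph is given by a boolean adjacency
   relation [adj] and the conductance by [c : nat -> nat -> R]
   (only its values on edges matter). *)

Definition simple_graph (n : nat) (adj : nat -> nat -> bool) : Prop :=
  (forall u v, (u < n)%nat -> (v < n)%nat -> adj u v = adj v u) /\
  (forall u, (u < n)%nat -> adj u u = false) /\
  (forall u v, adj u v = true -> (u < n)%nat /\ (v < n)%nat).

Definition conductance (n : nat) (adj : nat -> nat -> bool) (c : nat -> nat -> R) : Prop :=
  forall u v, adj u v = true -> c u v = c v u /\ 0 <= c u v.

Inductive reach (n : nat) (e : nat -> nat -> Prop) (u : nat) : nat -> Prop :=
  | reach_refl : (u < n)%nat -> reach n e u u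
  | reach_step : forall v w, reach n e u v -> e v w -> (w < n)%nat -> reach n e u w.

Definition connected (n : nat) (e : nat -> nat -> Prop) : Prop :=
  forall u v, (u < n)%nat -> (v < n)%nat -> reach n e u v.

Definition pos_edge (adj : nat -> nat -> bool) (c : nat -> nat -> R) (u v : nat) : Prop :=
  adj u v = true /\ 0 < c u v.

Definition wdeg (n : nat) (adj : nat -> nat -> bool) (c : nat -> nat -> R) (u : nat) : R :=
  sum_f_R0 (fun w => if adj u w then c u w else 0) (pred n).

Definition trans (n : nat) (adj : nat -> nat -> bool) (c : nat -> nat -> R) (u w : nat) : R :=
  if adj u w then c u w / wdeg n adj c u else 0.

(* hit_prob n adj c v t u = P_u(T_v = t), the probability that the walk
   started at u first reaches v at step t (first-step / Markov decomposition
   of the sum over paths u = x_0, ..., x_t = v avoiding v before time t). *)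
Fixpoint hit_prob (n : nat) (adj : nat -> nat -> bool) (c : nat -> nat -> R)
    (v : nat) (t : nat) (u : nat) : R :=
  match t with
  | O => if Nat.eqb u v then 1 else 0
  | S t' => if Nat.eqb u v then 0
            else sum_f_R0 (fun w => trans n adj c u w * hit_prob n adj c v t' w) (pred n)
  end.

Definition is_hitting_time (n : nat) (adj : nat -> nat -> bool) (c : nat -> nat -> R)
    (u v : nat) (h : R) : Prop :=
  infinite_sum (fun t => INR t * hit_prob n adj c v t u) h.

Fixpoint path_sum (H : nat -> nat -> R) (a : nat) (l : list nat) : R :=
  match l with
  | nil => 0
  | b :: l' => H a b + path_sum H b l'
  end.

Definition cyc_sum (H : nat -> nat -> R) (s : list nat) : R :=
  match s with
  | nil => 0
  | a :: s' => path_sum H a (s' ++ a :: nil)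
  end.

(* Main.v *)
Require Import Defs.
From Stdlib Require Import Reals Arith List Permutation Lra Lia.
From Coquelicot Require Import Coquelicot.
Open Scope R_scope.

Lemma sum_ext (f g : nat -> R) N : (forall i, (i <= N)%nat -> f i = g i) -> sum_f_R0 f N = sum_f_R0 g N.
Proof. apply sum_eq. Qed.

Lemma sum_sub (f g : nat -> R) N : sum_f_R0 (fun i => f i - g i) N = sum_f_R0 f N - sum_f_R0 g N.
Proof. induction N; simpl; lra. Qed.

Lemma sum_mulr (f : nat -> R) N k : sum_f_R0 (fun i => k * f i) N = k * sum_f_R0 f N.
Proof. induction N; simpl; lra. Qed.

Lemma sum_nonneg (f : nat -> R) N : (forall i, (i <= N)%nat -> 0 <= f i) -> 0 <= sum_f_R0 f N.
Proof. induction N; simpl; intros Hf. apply Hf; lia.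
  assert (0 <= f (S N)) by (apply Hf; lia). assert (0 <= sum_f_R0 f N) by (apply IHN; intros; apply Hf; lia). lra. Qed.

Lemma sum_ge_term (f : nat -> R) N j : (forall i, (i <= N)%nat -> 0 <= f i) -> (j <= N)%nat -> f j <= sum_f_R0 f N.
Proof. induction N; simpl; intros Hf Hj.
  - replace j with 0%nat by lia. lra.
  - destruct (Nat.eq_dec j (S N)) as [->|Hne].
    + assert (0 <= sum_f_R0 f N) by (apply sum_nonneg; intros; apply Hf; lia). lra.
    + assert (f j <= sum_f_R0 f N) by (apply IHN; [intros; apply Hf; lia| lia]).
      assert (0 <= f (S N)) by (apply Hf; lia). lra. Qed.

Lemma sum_nonpos_zero (f : nat -> R) N : (forall i, (i <= N)%nat -> f i <= 0) -> 0 <= sum_f_R0 f N ->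
  forall i, (i <= N)%nat -> f i = 0.
Proof.
  assert (Hn : forall M, (forall i, (i <= M)%nat -> f i <= 0) -> sum_f_R0 f M <= 0).
  { induction M; simpl; intros Hf. apply Hf; lia.
    assert (f (S M) <= 0) by (apply Hf; lia). assert (sum_f_R0 f M <= 0) by (apply IHM; intros; apply Hf; lia). lra. }
  induction N; simpl; intros Hf Hs i Hi.
  - assert (f 0%nat <= 0) by (apply Hf; lia). replace i with 0%nat by lia. lra.
  - assert (f (S N) <= 0) by (apply Hf; lia). assert (sum_f_R0 f N <= 0) by (apply Hn; intros; apply Hf; lia).
    destruct (Nat.eq_dec i (S N)) as [->|Hne]. lra.
    apply IHN; [intros; apply Hf; lia| lra | lia]. Qed.

Lemma sum_single (f : nat -> R) N v : (v <= N)%nat -> (forall i, (i <= N)%nat -> i <> v -> f i = 0) -> sum_f_R0 f N = f v.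
Proof.
  assert (Hz : forall M, (forall i, (i <= M)%nat -> f i = 0) -> sum_f_R0 f M = 0).
  { induction M; simpl; intros Hf. apply Hf; lia. rewrite IHM, (Hf (S M)); [lra|lia|intros; apply Hf; lia]. }
  induction N; simpl; intros Hv Hf.
  - replace v with 0%nat by lia. reflexivity.
  - destruct (Nat.eq_dec v (S N)) as [->|Hne].
    + rewrite Hz. lra. intros; apply Hf; lia.
    + rewrite IHN, (Hf (S N)); [lra|lia|lia|lia|intros; apply Hf; lia]. Qed.

Lemma sum_exchange (F : nat -> nat -> R) N M :
  sum_f_R0 (fun x => sum_f_R0 (fun w => F x w) M) N = sum_f_R0 (fun w => sum_f_R0 (fun x => F x w) N) M.
Proof. induction N; simpl. reflexivity. rewrite IHN. rewrite <- sum_plus. reflexivity. Qed.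

Lemma argmin_ex (g : nat -> R) N : exists m, (m <= N)%nat /\ forall y, (y <= N)%nat -> g m <= g y.
Proof. induction N.
  - exists 0%nat. split. lia. intros y Hy. replace y with 0%nat by lia. lra.
  - destruct IHN as [m [Hm Hmin]]. destruct (Rle_dec (g m) (g (S N))).
    + exists m. split. lia. intros y Hy. destruct (Nat.eq_dec y (S N)) as [->|]. lra. apply Hmin; lia.
    + exists (S N). split. lia. intros y Hy. destruct (Nat.eq_dec y (S N)) as [->|]. lra.
      specialize (Hmin y ltac:(lia)). lra. Qed.

Definition aw (adj : nat -> nat -> bool) (c : nat -> nat -> R) x w := if adj x w then c x w else 0.
Definition Lop n adj c (g : nat -> R) x := sum_f_R0 (fun w => aw adj c x w * (g x - g w)) (pred n).

Lemma aw_nonneg n adj c x w : conductance n adj c -> 0 <= aw adj c x w.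
Proof. intros Hc. unfold aw. destruct (adj x w) eqn:E. apply (Hc _ _ E). lra. Qed.

Lemma aw_sym n adj c x w : simple_graph n adj -> conductance n adj c -> (x < n)%nat -> (w < n)%nat ->
  aw adj c x w = aw adj c w x.
Proof. intros [Hs _] Hc Hx Hw. unfold aw. rewrite (Hs x w Hx Hw). destruct (adj w x) eqn:E; [|reflexivity].
  destruct (Hc _ _ E). congruence. Qed.

Lemma wdeg_eq n adj c x : wdeg n adj c x = sum_f_R0 (fun w => aw adj c x w) (pred n).
Proof. reflexivity. Qed.

Lemma reach_last n (e : nat -> nat -> Prop) u w : reach n e u w -> u <> w -> exists v, e v w.
Proof. intros Hr. destruct Hr. intros Hne; congruence. intros _. exists v. assumption. Qed.

Lemma wdeg_pos n adj c x : (2 <= n)%nat -> simple_graph n adj -> conductance n adj c ->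
  connected n (pos_edge adj c) -> (x < n)%nat -> 0 < wdeg n adj c x.
Proof.
  intros Hn Hs Hc Hcon Hx.
  set (y := if Nat.eqb x 0 then 1%nat else 0%nat).
  assert (Hy : (y < n)%nat /\ y <> x) by (unfold y; destruct (Nat.eqb_spec x 0); lia).
  destruct Hy as [Hy Hyx].
  assert (Hr := Hcon y x Hy Hx).
  destruct (reach_last _ _ _ _ Hr Hyx) as [v [Ha Hp]].
  destruct Hs as [Hsym [_ Hrng]]. destruct (Hrng _ _ Ha) as [Hv _].
  destruct (Hc _ _ Ha) as [Hcs _].
  rewrite wdeg_eq.
  apply Rlt_le_trans with (aw adj c x v).
  - unfold aw. rewrite <- (Hsym v x Hv Hx), Ha. lra.
  - apply sum_ge_term. intros; apply (aw_nonneg n). auto. lia.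
Qed.

Lemma min_principle n adj c (g : nat -> R) v : (2 <= n)%nat -> simple_graph n adj -> conductance n adj c ->
  connected n (pos_edge adj c) -> (v < n)%nat ->
  (forall x, (x < n)%nat -> x <> v -> 0 <= Lop n adj c g x) ->
  forall y, (y < n)%nat -> g v <= g y.
Proof.
  intros Hn Hs Hc Hcon Hv HL.
  destruct (argmin_ex g (pred n)) as [m [Hm Hmin]].
  assert (Hmin' : forall y, (y < n)%nat -> g m <= g y) by (intros; apply Hmin; lia).
  assert (Hm' : (m < n)%nat) by lia.
  assert (Hclaim : forall y, reach n (pos_edge adj c) m y -> g y = g m \/ g v = g m).
  { intros y Hr. induction Hr as [|z w Hr IH He Hw]. left; reflexivity.
    destruct IH as [IH|IH]; [|right; exact IH].
    assert (Hz : (z < n)%nat) by (destruct He as [Ha _]; destruct Hs as [_ [_ Hrng]]; apply (Hrng _ _ Ha)).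
    destruct (Nat.eq_dec z v) as [->|Hzv]. right; exact IH.
    left.
    assert (H0 := sum_nonpos_zero (fun w => aw adj c z w * (g z - g w)) (pred n)).
    assert (Hw0 : aw adj c z w * (g z - g w) = 0).
    { apply H0; [| apply HL; assumption | lia].
      intros i Hi. assert (0 <= aw adj c z i) by (apply (aw_nonneg n); auto).
      assert (g z <= g i) by (rewrite IH; apply Hmin'; lia).
      nra. }
    destruct He as [Ha Hp]. unfold aw in Hw0. rewrite Ha in Hw0.
    assert (g z - g w = 0) by (apply Rmult_integral in Hw0; destruct Hw0; lra). lra. }
  intros y Hy.
  assert (g v = g m) by (destruct (Hclaim v (Hcon m v Hm' Hv)); auto).
  rewrite H. apply Hmin'; auto.
Qed.

Lemma Lop_sum_zero n adj c g : (2 <= n)%nat -> simple_graph n adj -> conductance n adj c ->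
  sum_f_R0 (fun x => Lop n adj c g x) (pred n) = 0.
Proof.
  intros Hn Hs Hc. unfold Lop.
  transitivity (sum_f_R0 (fun x => sum_f_R0 (fun w => aw adj c x w * g x) (pred n)) (pred n)
      - sum_f_R0 (fun x => sum_f_R0 (fun w => aw adj c x w * g w) (pred n)) (pred n)).
  { rewrite <- sum_sub. apply sum_ext. intros. rewrite <- sum_sub. apply sum_ext. intros. ring. }
  rewrite (sum_exchange (fun x w => aw adj c x w * g w)).
  assert (sum_f_R0 (fun x => sum_f_R0 (fun w => aw adj c x w * g x) (pred n)) (pred n) =
     sum_f_R0 (fun w => sum_f_R0 (fun x => aw adj c x w * g w) (pred n)) (pred n)).
  { apply sum_ext. intros i Hi. apply sum_ext. intros j Hj.
    rewrite (aw_sym n adj c i j); auto; lia. }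
  lra.
Qed.

Lemma Lop_pair n adj c f g : (2 <= n)%nat -> simple_graph n adj -> conductance n adj c ->
  sum_f_R0 (fun x => f x * Lop n adj c g x) (pred n) = sum_f_R0 (fun x => g x * Lop n adj c f x) (pred n).
Proof.
  intros Hn Hs Hc. unfold Lop.
  transitivity (sum_f_R0 (fun x => sum_f_R0 (fun w => aw adj c x w * f x * g x) (pred n)) (pred n)
      - sum_f_R0 (fun x => sum_f_R0 (fun w => aw adj c x w * f x * g w) (pred n)) (pred n)).
  { rewrite <- sum_sub. apply sum_ext. intros. rewrite <- sum_mulr, <- sum_sub. apply sum_ext. intros. ring. }
  transitivity (sum_f_R0 (fun x => sum_f_R0 (fun w => aw adj c x w * g x * f x) (pred n)) (pred n)
      - sum_f_R0 (fun x => sum_f_R0 (fun w => aw adj c x w * g x * f w) (pred n)) (pred n)).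
  2:{ rewrite <- sum_sub. apply sum_ext. intros. rewrite <- sum_mulr, <- sum_sub. apply sum_ext. intros. ring. }
  rewrite (sum_exchange (fun x w => aw adj c x w * g x * f w)).
  assert (sum_f_R0 (fun x => sum_f_R0 (fun w => aw adj c x w * f x * g w) (pred n)) (pred n) =
     sum_f_R0 (fun w => sum_f_R0 (fun x => aw adj c x w * g x * f w) (pred n)) (pred n)).
  { apply sum_ext. intros i Hi. apply sum_ext. intros j Hj.
    rewrite (aw_sym n adj c i j); auto; try lia. ring. }
  assert (sum_f_R0 (fun x => sum_f_R0 (fun w => aw adj c x w * f x * g x) (pred n)) (pred n) =
     sum_f_R0 (fun x => sum_f_R0 (fun w => aw adj c x w * g x * f x) (pred n)) (pred n)).
  { apply sum_ext. intros i Hi. apply sum_ext. intros j Hj. ring. }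
  lra.
Qed.


Lemma is_series_zero : is_series (fun _ : nat => 0) 0.
Proof. apply is_series_Reals. intros eps He. exists 0%nat. intros m _. rewrite sum_cte.
  unfold R_dist. rewrite Rmult_0_l, Rminus_0_r, Rabs_R0. lra. Qed.

Lemma is_series_sumf (F : nat -> nat -> R) (L : nat -> R) N :
  (forall w, (w <= N)%nat -> is_series (F w) (L w)) ->
  is_series (fun t => sum_f_R0 (fun w => F w t) N) (sum_f_R0 L N).
Proof. induction N; simpl; intros HF.
  - apply HF; lia.
  - apply (is_series_plus (fun t => sum_f_R0 (fun w => F w t) N) (F (S N))).
    apply IHN; intros; apply HF; lia. apply HF; lia. Qed.

Lemma is_series_scalR (k : R) (a : nat -> R) l : is_series a l -> is_series (fun t => k * a t) (k * l).
Proof. intros Ha. exact (is_series_scal k a l Ha). Qed.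

Lemma is_series_plusR (a b : nat -> R) la lb : is_series a la -> is_series b lb ->
  is_series (fun t => a t + b t) (la + lb).
Proof. intros Ha Hb. exact (is_series_plus a b la lb Ha Hb). Qed.

Lemma is_series_shift (a : nat -> R) l : is_series a l -> a 0%nat = 0 -> is_series (fun t => a (S t)) l.
Proof. intros Ha H0. apply is_series_incr_1. change (plus l (a 0%nat)) with (l + a 0%nat).
  rewrite H0, Rplus_0_r. exact Ha. Qed.

Lemma is_series_unshift (a : nat -> R) l : is_series (fun t => a (S t)) l -> a 0%nat = 0 -> is_series a l.
Proof. intros Ha H0. apply is_series_decr_1. change (plus l (opp (a 0%nat))) with (l + - a 0%nat).
  rewrite H0, Ropp_0, Rplus_0_r. exact Ha. Qed.

Section S.
End S.

Lemma wdeg_nonneg n adj c x : conductance n adj c -> 0 <= wdeg n adj c x.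
Proof. intros Hc. rewrite wdeg_eq. apply sum_nonneg. intros; apply (aw_nonneg n); auto. Qed.

Lemma trans_eq n adj c x w : trans n adj c x w = aw adj c x w / wdeg n adj c x.
Proof. unfold trans, aw. destruct (adj x w); [reflexivity| unfold Rdiv; ring]. Qed.

Lemma trans_nonneg n adj c x w : conductance n adj c -> 0 <= trans n adj c x w.
Proof. intros Hc. rewrite trans_eq. unfold Rdiv. apply Rmult_le_pos. apply (aw_nonneg n); auto.
  destruct (Rle_lt_or_eq _ _ (wdeg_nonneg n adj c x Hc)) as [Hp|He].
  left; apply Rinv_0_lt_compat; auto. rewrite <- He, Rinv_0. lra. Qed.

Lemma hp_nonneg n adj c v t x : conductance n adj c -> 0 <= hit_prob n adj c v t x.
Proof. intros Hc. revert x; induction t; intros x; simpl.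
  destruct (Nat.eqb x v); lra.
  destruct (Nat.eqb x v). lra. apply sum_nonneg. intros. apply Rmult_le_pos. apply trans_nonneg; auto. apply IHt. Qed.

Lemma hp_S n adj c v t x : x <> v ->
  hit_prob n adj c v (S t) x = sum_f_R0 (fun w => trans n adj c x w * hit_prob n adj c v t w) (pred n).
Proof. intros Hx. simpl. destruct (Nat.eqb_spec x v). congruence. reflexivity. Qed.

Lemma hp_v0 n adj c v : hit_prob n adj c v 0 v = 1.
Proof. simpl. rewrite Nat.eqb_refl. reflexivity. Qed.
Lemma hp_vS n adj c v t : hit_prob n adj c v (S t) v = 0.
Proof. simpl. rewrite Nat.eqb_refl. reflexivity. Qed.
Lemma hp_x0 n adj c v x : x <> v -> hit_prob n adj c v 0 x = 0.
Proof. intros Hx. simpl. destruct (Nat.eqb_spec x v). congruence. reflexivity. Qed.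

Lemma Lop_eq n adj c g x : Lop n adj c g x = wdeg n adj c x * g x - sum_f_R0 (fun w => aw adj c x w * g w) (pred n).
Proof. unfold Lop. rewrite wdeg_eq. rewrite (Rmult_comm _ (g x)), scal_sum, <- sum_sub. apply sum_ext. intros; ring. Qed.

Lemma trans_sum n adj c g x : sum_f_R0 (fun w => trans n adj c x w * g w) (pred n) =
  sum_f_R0 (fun w => aw adj c x w * g w) (pred n) / wdeg n adj c x.
Proof. unfold Rdiv. rewrite Rmult_comm, scal_sum. apply sum_ext. intros. rewrite trans_eq. unfold Rdiv. ring. Qed.

Lemma Q_ex n adj c (H : nat -> nat -> R) v w : conductance n adj c ->
  (forall u v, (u < n)%nat -> (v < n)%nat -> is_hitting_time n adj c u v (H u v)) ->
  (v < n)%nat -> (w < n)%nat -> ex_series (fun t => hit_prob n adj c v t w).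
Proof.
  intros Hc HH Hv Hw. destruct (Nat.eq_dec w v) as [->|Hne].
  - exists 1. apply is_series_decr_1. change (plus 1 (opp (hit_prob n adj c v 0 v))) with (1 + - hit_prob n adj c v 0 v).
    replace (1 + - hit_prob n adj c v 0 v) with 0 by (rewrite hp_v0; ring).
    apply (is_series_ext (fun _ => 0)). intros; rewrite hp_vS; reflexivity. apply is_series_zero.
  - apply (@ex_series_le R_AbsRing R_CompleteNormedModule _ (fun t => INR t * hit_prob n adj c v t w)).
    + intros t. change (norm (hit_prob n adj c v t w)) with (Rabs (hit_prob n adj c v t w)).
      assert (Hp := hp_nonneg n adj c v t w Hc). rewrite Rabs_right by lra.
      destruct t. rewrite hp_x0 by auto. simpl. lra.
      assert (1 <= INR (S t)) by (apply (le_INR 1); lia). nra.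
    + exists (H w v). apply is_series_Reals. apply HH; auto.
Qed.

Definition Qf n adj c v w := Series (fun t => hit_prob n adj c v t w).

Lemma Q_eq n adj c (H : nat -> nat -> R) v x : (2 <= n)%nat -> conductance n adj c ->
  (forall u v, (u < n)%nat -> (v < n)%nat -> is_hitting_time n adj c u v (H u v)) ->
  (v < n)%nat -> (x < n)%nat -> x <> v ->
  Qf n adj c v x = sum_f_R0 (fun w => trans n adj c x w * Qf n adj c v w) (pred n).
Proof.
  intros Hn Hc HH Hv Hx Hxv.
  assert (H1 : is_series (fun t => hit_prob n adj c v (S t) x) (Qf n adj c v x)).
  { apply (is_series_shift (fun t => hit_prob n adj c v t x)). apply Series_correct. apply (Q_ex n adj c H); auto. apply hp_x0; auto. }
  assert (H2 : is_series (fun t => hit_prob n adj c v (S t) x)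
                 (sum_f_R0 (fun w => trans n adj c x w * Qf n adj c v w) (pred n))).
  { apply (is_series_ext (fun t => sum_f_R0 (fun w => trans n adj c x w * hit_prob n adj c v t w) (pred n))).
    intros t. rewrite hp_S; auto.
    apply (is_series_sumf (fun w t => trans n adj c x w * hit_prob n adj c v t w)).
    intros w Hw. apply is_series_scalR. apply Series_correct. apply (Q_ex n adj c H); auto. lia. }
  apply is_series_unique in H1. apply is_series_unique in H2. congruence.
Qed.

Lemma Q_v n adj c v : Qf n adj c v v = 1.
Proof. unfold Qf. apply is_series_unique. apply is_series_decr_1.
  change (plus 1 (opp (hit_prob n adj c v 0 v))) with (1 + - hit_prob n adj c v 0 v).
  replace (1 + - hit_prob n adj c v 0 v) with 0 by (rewrite hp_v0; ring).
  apply (is_series_ext (fun _ => 0)). intros; rewrite hp_vS; reflexivity. apply is_series_zero. Qed.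

Lemma H_eq n adj c (H : nat -> nat -> R) v x : (2 <= n)%nat -> conductance n adj c ->
  (forall u v, (u < n)%nat -> (v < n)%nat -> is_hitting_time n adj c u v (H u v)) ->
  (v < n)%nat -> (x < n)%nat -> x <> v ->
  H x v = sum_f_R0 (fun w => trans n adj c x w * (H w v + Qf n adj c v w)) (pred n).
Proof.
  intros Hn Hc HH Hv Hx Hxv.
  assert (H1 : is_series (fun t => INR (S t) * hit_prob n adj c v (S t) x) (H x v)).
  { apply (is_series_shift (fun t => INR t * hit_prob n adj c v t x)).
    apply is_series_Reals. apply HH; auto. simpl. ring. }
  assert (H2 : is_series (fun t => INR (S t) * hit_prob n adj c v (S t) x)
                 (sum_f_R0 (fun w => trans n adj c x w * (H w v + Qf n adj c v w)) (pred n))).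
  { apply (is_series_ext (fun t => sum_f_R0 (fun w => trans n adj c x w * (INR t * hit_prob n adj c v t w + hit_prob n adj c v t w)) (pred n))).
    intros t. rewrite hp_S; auto. rewrite S_INR. rewrite scal_sum.
    apply sum_ext. intros; ring.
    apply (is_series_sumf (fun w t => trans n adj c x w * (INR t * hit_prob n adj c v t w + hit_prob n adj c v t w))).
    intros w Hw. apply is_series_scalR. apply is_series_plusR.
    apply is_series_Reals. apply HH; auto; lia.
    apply Series_correct. apply (Q_ex n adj c H); auto. lia. }
  apply is_series_unique in H1. apply is_series_unique in H2. congruence.
Qed.

Lemma H_vv n adj c (H : nat -> nat -> R) v :
  (forall u v, (u < n)%nat -> (v < n)%nat -> is_hitting_time n adj c u v (H u v)) ->
  (v < n)%nat -> H v v = 0.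
Proof.
  intros HH Hv. assert (H1 := HH v v Hv Hv). apply is_series_Reals in H1.
  apply is_series_unique in H1. rewrite <- H1. apply is_series_unique.
  apply (is_series_ext (fun _ => 0)). intros t. destruct t. rewrite hp_v0. simpl. symmetry; apply Rmult_0_l. rewrite hp_vS. symmetry; apply Rmult_0_r.
  apply is_series_zero.
Qed.

Lemma Lop_zero_of n adj c g x : (2 <= n)%nat -> simple_graph n adj -> conductance n adj c ->
  connected n (pos_edge adj c) -> (x < n)%nat ->
  g x = sum_f_R0 (fun w => trans n adj c x w * g w) (pred n) -> Lop n adj c g x = 0.
Proof.
  intros Hn Hs Hc Hcon Hx Hg. rewrite Lop_eq. rewrite trans_sum in Hg.
  assert (Hd := wdeg_pos n adj c x Hn Hs Hc Hcon Hx).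
  rewrite Hg. field. lra. Qed.

Lemma Q_one n adj c (H : nat -> nat -> R) v x : (2 <= n)%nat -> simple_graph n adj -> conductance n adj c ->
  connected n (pos_edge adj c) ->
  (forall u v, (u < n)%nat -> (v < n)%nat -> is_hitting_time n adj c u v (H u v)) ->
  (v < n)%nat -> (x < n)%nat -> Qf n adj c v x = 1.
Proof.
  intros Hn Hs Hc Hcon HH Hv Hx.
  assert (HL : forall y, (y < n)%nat -> y <> v -> Lop n adj c (Qf n adj c v) y = 0).
  { intros y Hy Hyv. apply Lop_zero_of; auto. apply (Q_eq n adj c H); auto. }
  assert (H1 := min_principle n adj c (Qf n adj c v) v Hn Hs Hc Hcon Hv).
  assert (H2 := min_principle n adj c (fun y => - Qf n adj c v y) v Hn Hs Hc Hcon Hv).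
  assert (A1 : Qf n adj c v v <= Qf n adj c v x).
  { apply H1; auto. intros y Hy Hyv. rewrite HL; auto; lra. }
  assert (A2 : - Qf n adj c v v <= - Qf n adj c v x).
  { apply H2; auto. intros y Hy Hyv.
    assert (Lop n adj c (fun y0 => - Qf n adj c v y0) y = - Lop n adj c (Qf n adj c v) y).
    { unfold Lop. replace (- sum_f_R0 (fun w => aw adj c y w * (Qf n adj c v y - Qf n adj c v w)) (pred n))
        with ((-1) * sum_f_R0 (fun w => aw adj c y w * (Qf n adj c v y - Qf n adj c v w)) (pred n)) by ring.
      rewrite <- sum_mulr. apply sum_ext. intros; ring. }
    rewrite H0, HL; auto; lra. }
  rewrite Q_v in A1, A2. lra.
Qed.

Lemma E_L n adj c (H : nat -> nat -> R) v x : (2 <= n)%nat -> simple_graph n adj -> conductance n adj c ->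
  connected n (pos_edge adj c) ->
  (forall u v, (u < n)%nat -> (v < n)%nat -> is_hitting_time n adj c u v (H u v)) ->
  (v < n)%nat -> (x < n)%nat -> x <> v ->
  Lop n adj c (fun y => H y v) x = wdeg n adj c x.
Proof.
  intros Hn Hs Hc Hcon HH Hv Hx Hxv.
  assert (He := H_eq n adj c H v x Hn Hc HH Hv Hx Hxv).
  assert (He' : H x v = sum_f_R0 (fun w => trans n adj c x w * (H w v + 1)) (pred n)).
  { rewrite He. apply sum_ext. intros w Hw. rewrite (Q_one n adj c H); auto. lia. }
  rewrite trans_sum in He'.
  assert (Hs1 : sum_f_R0 (fun w => aw adj c x w * (H w v + 1)) (pred n) =
      sum_f_R0 (fun w => aw adj c x w * H w v) (pred n) + wdeg n adj c x).
  { rewrite wdeg_eq, <- sum_plus. apply sum_ext. intros; ring. }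
  rewrite Hs1 in He'. rewrite Lop_eq. simpl.
  assert (Hd := wdeg_pos n adj c x Hn Hs Hc Hcon Hx).
  rewrite He'. field. lra.
Qed.

Definition C2 n adj c := sum_f_R0 (fun x => wdeg n adj c x) (pred n).

Lemma Lop_at_v n adj c (H : nat -> nat -> R) v : (2 <= n)%nat -> simple_graph n adj -> conductance n adj c ->
  connected n (pos_edge adj c) ->
  (forall u v, (u < n)%nat -> (v < n)%nat -> is_hitting_time n adj c u v (H u v)) ->
  (v < n)%nat -> Lop n adj c (fun y => H y v) v - wdeg n adj c v = - C2 n adj c.
Proof.
  intros Hn Hs Hc Hcon HH Hv.
  rewrite <- (sum_single (fun x => Lop n adj c (fun y => H y v) x - wdeg n adj c x) (pred n) v).
  - rewrite sum_sub, Lop_sum_zero; auto. unfold C2. rewrite Rminus_0_l. reflexivity.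
  - lia.
  - intros i Hi Hiv. rewrite (E_L n adj c H); auto. ring. lia.
Qed.

Definition Kf n adj c (H : nat -> nat -> R) u := sum_f_R0 (fun x => H x u * wdeg n adj c x) (pred n).

Lemma pair_val n adj c (H : nat -> nat -> R) u v : (2 <= n)%nat -> simple_graph n adj -> conductance n adj c ->
  connected n (pos_edge adj c) ->
  (forall u v, (u < n)%nat -> (v < n)%nat -> is_hitting_time n adj c u v (H u v)) ->
  (u < n)%nat -> (v < n)%nat ->
  sum_f_R0 (fun x => H x u * Lop n adj c (fun y => H y v) x) (pred n) = Kf n adj c H u - H v u * C2 n adj c.
Proof.
  intros Hn Hs Hc Hcon HH Hu Hv.
  assert (sum_f_R0 (fun x => H x u * Lop n adj c (fun y => H y v) x - H x u * wdeg n adj c x) (pred n)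
          = H v u * (- C2 n adj c)).
  { rewrite (sum_single _ (pred n) v). assert (X := Lop_at_v n adj c H v Hn Hs Hc Hcon HH Hv).
    transitivity (H v u * (Lop n adj c (fun y => H y v) v - wdeg n adj c v)). ring. rewrite X. reflexivity. lia.
    intros i Hi Hiv. rewrite (E_L n adj c H); auto. ring. lia. }
  rewrite sum_sub in H0. unfold Kf. lra.
Qed.

Lemma antisym n adj c (H : nat -> nat -> R) u v : (2 <= n)%nat -> simple_graph n adj -> conductance n adj c ->
  connected n (pos_edge adj c) ->
  (forall u v, (u < n)%nat -> (v < n)%nat -> is_hitting_time n adj c u v (H u v)) ->
  (u < n)%nat -> (v < n)%nat ->
  C2 n adj c * (H u v - H v u) = Kf n adj c H v - Kf n adj c H u.
Proof.
  intros Hn Hs Hc Hcon HH Hu Hv.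
  assert (P := Lop_pair n adj c (fun y => H y u) (fun y => H y v) Hn Hs Hc). simpl in P.
  rewrite (pair_val n adj c H u v), (pair_val n adj c H v u) in P; auto. lra.
Qed.

Lemma C2_pos n adj c : (2 <= n)%nat -> simple_graph n adj -> conductance n adj c ->
  connected n (pos_edge adj c) -> 0 < C2 n adj c.
Proof.
  intros Hn Hs Hc Hcon. unfold C2. apply Rlt_le_trans with (wdeg n adj c 0).
  apply wdeg_pos; auto; lia. apply sum_ge_term. intros; apply wdeg_nonneg; auto. lia. Qed.

Lemma commute n adj c (H : nat -> nat -> R) u v : (2 <= n)%nat -> simple_graph n adj -> conductance n adj c ->
  connected n (pos_edge adj c) ->
  (forall u v, (u < n)%nat -> (v < n)%nat -> is_hitting_time n adj c u v (H u v)) ->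
  (u < n)%nat -> (v < n)%nat -> u <> v ->
  C2 n adj c <= wdeg n adj c u * (H u v + H v u).
Proof.
  intros Hn Hs Hc Hcon HH Hu Hv Huv.
  set (f := fun y => H y v - H y u).
  assert (Lf : forall x, Lop n adj c f x = Lop n adj c (fun y => H y v) x - Lop n adj c (fun y => H y u) x).
  { intros x. unfold Lop, f. rewrite <- sum_sub. apply sum_ext. intros; ring. }
  assert (Lfu : Lop n adj c f u = C2 n adj c).
  { rewrite Lf, (E_L n adj c H v u); auto. assert (X := Lop_at_v n adj c H u Hn Hs Hc Hcon HH Hu). lra. }
  assert (Hmin : forall y, (y < n)%nat -> f v <= f y).
  { apply (min_principle n adj c f v); auto. intros x Hx Hxv. destruct (Nat.eq_dec x u) as [->|Hxu].
    rewrite Lfu. left; apply C2_pos; auto.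
    rewrite Lf, (E_L n adj c H v x), (E_L n adj c H u x); auto. lra. }
  rewrite <- Lfu. unfold Lop.
  apply Rle_trans with (sum_f_R0 (fun w => aw adj c u w * (f u - f v)) (pred n)).
  { apply sum_Rle. intros w Hw. assert (0 <= aw adj c u w) by (apply (aw_nonneg n); auto).
    assert (f v <= f w) by (apply Hmin; lia). nra. }
  rewrite wdeg_eq, (Rmult_comm _ (H u v + H v u)), scal_sum. right. apply sum_ext. intros w Hw.
  unfold f. rewrite (H_vv n adj c H u), (H_vv n adj c H v); auto. ring.
Qed.

Definition lsum (g : nat -> R) (l : list nat) := fold_right (fun x acc => g x + acc) 0 l.

Lemma lsum_app g l1 l2 : lsum g (l1 ++ l2) = lsum g l1 + lsum g l2.
Proof. induction l1; simpl. lra. unfold lsum in *. simpl. rewrite IHl1. lra. Qed.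

Lemma lsum_perm g l1 l2 : Permutation l1 l2 -> lsum g l1 = lsum g l2.
Proof. induction 1; unfold lsum in *; simpl; try lra. Qed.

Lemma lsum_seq g m : lsum g (seq 0 (S m)) = sum_f_R0 g m.
Proof. induction m. unfold lsum; simpl; lra.
  rewrite seq_S, lsum_app, IHm. simpl. unfold lsum; simpl. lra. Qed.

Lemma path_tel (Hm Sm : nat -> nat -> R) (phi : nat -> R) n z :
  (forall x y, (x < n)%nat -> (y < n)%nat -> Hm x y = Sm x y + phi y - phi x) ->
  (z < n)%nat -> forall l a, (a < n)%nat -> (forall x, In x l -> (x < n)%nat) ->
  path_sum Hm a (l ++ z :: nil) = path_sum Sm a (l ++ z :: nil) + phi z - phi a.
Proof.
  intros HS Hz l. induction l as [|b l IH]; intros a Ha Hl; simpl.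
  - rewrite HS; auto. lra.
  - rewrite IH; auto. rewrite HS; auto. lra. apply Hl; simpl; auto. apply Hl; simpl; auto. intros; apply Hl; simpl; auto.
Qed.

Lemma path_ge (Sm G : nat -> nat -> R) n z :
  (forall x y, (x < n)%nat -> (y < n)%nat -> x <> y -> G x y <= Sm x y) ->
  (z < n)%nat -> forall l a, (a < n)%nat -> (forall x, In x l -> (x < n)%nat) ->
  NoDup (a :: l) -> ~ In z l -> (l = nil -> a <> z) ->
  path_sum G a (l ++ z :: nil) <= path_sum Sm a (l ++ z :: nil).
Proof.
  intros HS Hz l. induction l as [|b l IH]; intros a Ha Hl Hnd Hzl Hnil; simpl.
  - assert (a <> z) by auto. assert (G a z <= Sm a z) by (apply HS; auto). lra.
  - inversion Hnd; subst. inversion H2; subst.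
    assert (a <> b) by (intros ->; apply H1; simpl; auto).
    assert (G a b <= Sm a b) by (apply HS; auto; apply Hl; simpl; auto).
    assert (path_sum G b (l ++ z :: nil) <= path_sum Sm b (l ++ z :: nil)).
    { apply IH; auto. apply Hl; simpl; auto. intros; apply Hl; simpl; auto.
      intros Hin; apply Hzl; simpl; auto. intros _ ->. apply Hzl; simpl; auto. }
    lra.
Qed.

Lemma path_G (g : nat -> R) k z : forall l a,
  path_sum (fun x y => k * (g x + g y)) a (l ++ z :: nil) = k * (g a + 2 * lsum g l + g z).
Proof. intros l; induction l as [|b l IH]; intros a; simpl. unfold lsum; simpl; ring.
  rewrite IH. unfold lsum; simpl. ring. Qed.

Lemma tangent (d A : R) : 0 < d -> 0 < A -> 2 * / A - d * / A ^ 2 <= / d.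
Proof. intros Hd HA.
  assert (/ d - (2 * / A - d * / A ^ 2) = (A - d) ^ 2 * / (d * A ^ 2)) by (field; lra).
  assert (0 <= (A - d) ^ 2 * / (d * A ^ 2)).
  { apply Rmult_le_pos. apply pow2_ge_0. left; apply Rinv_0_lt_compat. apply Rmult_lt_0_compat; auto. apply pow_lt; auto. }
  lra. Qed.

Theorem proposition1 (n : nat) (adj : nat -> nat -> bool) (c : nat -> nat -> R)
  (H : nat -> nat -> R) :
  (2 <= n)%nat ->
  simple_graph n adj ->
  connected n (fun u v => adj u v = true) ->
  conductance n adj c ->
  connected n (pos_edge adj c) ->
  (forall u v, (u < n)%nat -> (v < n)%nat -> is_hitting_time n adj c u v (H u v)) ->
  forall s : list nat, Permutation s (seq 0 n) ->
    cyc_sum H s >= / 2 * INR n ^ 2.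
Proof.
  intros Hn Hs _ Hc Hcon HH s Hp.
  set (K := C2 n adj c).
  assert (HK : 0 < K) by (apply C2_pos; auto).
  set (Sm := fun x y => (H x y + H y x) / 2).
  set (phi := fun x => Kf n adj c H x / (2 * K)).
  set (g := fun x => / wdeg n adj c x).
  set (k := K / 4).
  assert (HS : forall x y, (x < n)%nat -> (y < n)%nat -> H x y = Sm x y + phi y - phi x).
  { intros x y Hx Hy. assert (X := antisym n adj c H x y Hn Hs Hc Hcon HH Hx Hy).
    unfold Sm, phi. fold K in X.
    replace (Kf n adj c H y) with (K * (H x y - H y x) + Kf n adj c H x) by lra. field. lra. }
  assert (HG : forall x y, (x < n)%nat -> (y < n)%nat -> x <> y -> k * (g x + g y) <= Sm x y).
  { intros x y Hx Hy Hxy.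
    assert (C1 := commute n adj c H x y Hn Hs Hc Hcon HH Hx Hy Hxy).
    assert (C3 := commute n adj c H y x Hn Hs Hc Hcon HH Hy Hx (not_eq_sym Hxy)).
    assert (dx := wdeg_pos n adj c x Hn Hs Hc Hcon Hx).
    assert (dy := wdeg_pos n adj c y Hn Hs Hc Hcon Hy).
    fold K in C1, C3.
    assert (K * / wdeg n adj c x <= H x y + H y x).
    { apply Rmult_le_reg_l with (wdeg n adj c x); auto. field_simplify; lra. }
    assert (K * / wdeg n adj c y <= H x y + H y x).
    { apply Rmult_le_reg_l with (wdeg n adj c y); auto. field_simplify; lra. }
    unfold k, g, Sm. lra. }
  assert (Hin : forall x, In x s -> (x < n)%nat).
  { intros x Hx. apply (Permutation_in _ Hp) in Hx. apply in_seq in Hx. lia. }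
  assert (Hnd : NoDup s) by (apply (Permutation_NoDup (Permutation_sym Hp)), seq_NoDup).
  assert (Hlen : length s = n) by (rewrite (Permutation_length Hp), length_seq; auto).
  destruct s as [|a s']. simpl in Hlen. lia.
  destruct s' as [|b s'']. simpl in Hlen. lia.
  set (s' := b :: s'').
  unfold cyc_sum. fold s'.
  assert (Ha : (a < n)%nat) by (apply Hin; simpl; auto).
  rewrite (path_tel H Sm phi n a HS Ha s' a Ha) by (intros; apply Hin; simpl; auto).
  assert (Hge := path_ge Sm (fun x y => k * (g x + g y)) n a HG Ha s' a Ha).
  rewrite path_G in Hge.
  assert (Hge' : k * (g a + 2 * lsum g s' + g a) <= path_sum Sm a (s' ++ a :: nil)).
  { apply Hge. intros; apply Hin; simpl; auto. exact Hnd. inversion Hnd; auto. unfold s'; discriminate. }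
  assert (Hsum : g a + 2 * lsum g s' + g a = 2 * sum_f_R0 g (pred n)).
  { rewrite <- lsum_seq. replace (S (pred n)) with n by lia.
    rewrite <- (lsum_perm g _ _ Hp). unfold lsum; simpl. fold (lsum g s''). unfold s', lsum; simpl. ring. }
  rewrite Hsum in Hge'.
  set (A := K / INR n).
  assert (Hn0 : 0 < INR n) by (apply lt_0_INR; lia).
  assert (HA : 0 < A) by (unfold A; apply Rdiv_lt_0_compat; auto).
  assert (Ht : sum_f_R0 (fun x => 2 * / A - wdeg n adj c x * / A ^ 2) (pred n) <= sum_f_R0 g (pred n)).
  { apply sum_Rle. intros x Hx. apply tangent; auto. apply wdeg_pos; auto. lia. }
  rewrite sum_sub, sum_cte in Ht.
  replace (S (pred n)) with n in Ht by lia.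
  replace (sum_f_R0 (fun i => wdeg n adj c i * / A ^ 2) (pred n)) with (/ A ^ 2 * K) in Ht
    by (unfold K, C2; rewrite scal_sum; reflexivity).
  assert (E : 2 * / A * INR n - / A ^ 2 * K = INR n ^ 2 / K) by (unfold A; field; lra).
  rewrite E in Ht.
  assert (k * (2 * sum_f_R0 g (pred n)) >= / 2 * INR n ^ 2).
  { unfold k. apply Rle_ge. apply Rle_trans with (K / 4 * (2 * (INR n ^ 2 / K))).
    right. field. lra. apply Rmult_le_compat_l. lra. lra. }
  lra.
Qed.
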